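(* Let $\vec{\alpha}=\langle\alpha_s:s\in[\mathbb{N}]^{<\infty}\rangle$ be a sequence of nonstandard hypernatural numbers. Suppose $H\subseteq[\mathbb{N}]^{<\infty}$ satisfies $s\cup\{\alpha_s\}\in{}^*H$ for all $s\in H$. Then for every $\vec{\alpha}$-tree $T$ with $st(T)\in H$ there exists an $\vec{\alpha}$-tree $S\subseteq T$ with $st(S)=st(T)$ such that $S/st(S)\subseteq H$.
   Context: Setting (Alpha-Theory of Benci–Di Nasso): ZFC together with a new symbol $\alpha$ satisfying: ($\alpha$1) every sequence $\varphi=\langle\varphi_i:i\in\mathbb{N}\rangle$ has a unique ideal value $\varphi[\alpha]$; ($\alpha$2) if $\varphi[\alpha]=\psi[\alpha]$ and $f\circ\varphi$, $f\circ\psi$ make sense then $(f\circ\varphi)[\alpha]=(f\circ\psi)[\alpha]$; ($\alpha$3) constant real sequences $r$ have ideal value $r$, and $\langle i\rangle$ has ideal value $\alpha\notin\mathbb{N}$; ($\alpha$4) if $\vartheta_i=\{\varphi_i,\psi_i\}$ then $\vartheta[\alpha]=\{\varphi[\alpha],\psi[\alpha]\}$; ($\alpha$5) the constant sequence $\emptyset$ has ideal value $\emptyset$, and for nonempty $\psi_i$, $\psi[\alpha]=\{\vartheta[\alpha]:\vartheta_i\in\psi_i\ \forall i\}$. ${}^*A$ is the ideal value of the constant sequence $A$; elements of ${}^*\mathbb{N}\setminus\mathbb{N}$ are nonstandard hypernatural numbers. For finite $s,t\subseteq\mathbb{N}$, $s\sqsubseteq t$ means $s=\{j\in t:j\le i\}$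 for some $i$. A tree on $\mathbb{N}$ is a nonempty $T\subseteq[\mathbb{N}]^{<\infty}$ closed under $\sqsubseteq$-initial segments; stem $st(T)$ = $\sqsubseteq$-maximal $s\in T$ comparable with all elements of $T$ (if it exists); $T/s=\{t\in T:s\sqsubseteq t\}$. An $\vec{\alpha}$-tree is a tree $T$ with a stem, $T/st(T)\neq\emptyset$, and $s\cup\{\alpha_s\}\in{}^*T$ for all $s\in T/st(T)$. *)

(* Defs.v *)
From mathcomp Require Import all_boot.
From mathcomp Require Import finmap.
Set Implicit Arguments. Unset Strict Implicit. Unset Printing Implicit Defensive.
Local Open Scope fset_scope.

Definition ultrafilter (U : (nat -> Prop) -> Prop) : Prop :=
  (forall A B : nat -> Prop, U A -> (forall i, A i -> B i) -> U B) /\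
  (forall A B : nat -> Prop, U A -> U B -> U (fun i => A i /\ B i)) /\
  ~ U (fun _ => False) /\
  (forall A : nat -> Prop, U A \/ U (fun i => ~ A i)).

(* U is the ultrafilter U_alpha = {A | alpha \in *A}; alpha \notin N means
   U contains every cosingleton. *)
Definition alpha_ultrafilter (U : (nat -> Prop) -> Prop) : Prop :=
  ultrafilter U /\ forall n : nat, U (fun i => i <> n).

(* The hypernatural [a] (a : nat -> nat) is nonstandard. *)
Definition nonstandard (U : (nat -> Prop) -> Prop) (a : nat -> nat) : Prop :=
  forall n : nat, U (fun i => a i <> n).

(* s \in *H for the hyperfinite set represented by the sequence phi. *)
Definition star_mem (U : (nat -> Prop) -> Prop) (H : {fset nat} -> Prop)
  (phi : nat -> {fset nat}) : Prop := U (fun i => H (phi i)).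

Definition sqsub (s t : {fset nat}) : Prop :=
  exists i : nat, s = [fset j in t | (j <= i)%N].

Definition comparable (s t : {fset nat}) : Prop := sqsub s t \/ sqsub t s.

Definition is_tree (T : {fset nat} -> Prop) : Prop :=
  (exists t, T t) /\ (forall s t, T t -> sqsub s t -> T s).

Definition is_stem (T : {fset nat} -> Prop) (s : {fset nat}) : Prop :=
  T s /\ (forall t, T t -> comparable s t) /\
  (forall s', T s' -> (forall t, T t -> comparable s' t) -> sqsub s' s).

Definition tree_above (T : {fset nat} -> Prop) (s : {fset nat}) :=
  fun t => T t /\ sqsub s t.

(* alpha-vector given by a : {fset nat} -> (nat -> nat), alpha_s = [a s]. *)
Definition alpha_tree (U : (nat -> Prop) -> Prop)
  (a : {fset nat} -> nat -> nat) (T : {fset nat} -> Prop) : Prop :=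
  is_tree T /\ exists st, is_stem T st /\ (exists t, tree_above T st t) /\
    forall s, tree_above T st s -> star_mem U T (fun i => s `|` [fset a s i]).

(* Main.v *)
Require Import Defs.
From mathcomp Require Import all_boot.
From mathcomp Require Import finmap.
Local Open Scope fset_scope.
Set Implicit Arguments.

Lemma bnd_seq (l : seq nat) : exists m, forall j, j \in l -> (j <= m)%N.
Proof. elim: l => [|x l [m Hm]]; first by exists 0.
exists (maxn x m) => j; rewrite inE => /orP [/eqP->|/Hm]; rewrite leq_max ?leqnn //.
by move=> ->; rewrite orbT. Qed.

Lemma bnd (s : {fset nat}) : exists m, forall j, j \in s -> (j <= m)%N.
Proof. have [m Hm] := bnd_seq s. exists m => j Hj. apply: Hm. exact Hj. Qed.

Lemma sq_mem {s t : {fset nat}} {j : nat} : sqsub s t -> j \in s -> j \in t.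
Proof. by move=> [i ->]; rewrite !inE => /andP[]. Qed.

Lemma sq_refl (s : {fset nat}) : sqsub s s.
Proof. have [m Hm] := bnd s. exists m; apply/fsetP => j; rewrite !inE.
by case E: (j \in s) => //=; rewrite Hm. Qed.

Lemma sq_trans {s t w : {fset nat}} : sqsub s t -> sqsub t w -> sqsub s w.
Proof. move=> [i ->] [k ->]; exists (minn i k); apply/fsetP => j; rewrite !inE.
by rewrite leq_min -andbA [(j <= k) && _]andbC. Qed.

Lemma sq_comp {s s' t : {fset nat}} : sqsub s t -> sqsub s' t -> sqsub s s' \/ sqsub s' s.
Proof. move=> [i ->] [k ->]; case: (leqP i k) => hik.
- left; exists i; apply/fsetP => j; rewrite !inE.
  case: (j \in t) => //=; case E: (j <= i)%N; rewrite ?andbF ?andbT //.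
  by rewrite (leq_trans E hik).
- right; exists k; apply/fsetP => j; rewrite !inE.
  case: (j \in t) => //=; case E: (j <= k)%N; rewrite ?andbF ?andbT //.
  by rewrite (leq_trans E (ltnW hik)).
Qed.

Lemma sq_anti {s t : {fset nat}} : sqsub s t -> sqsub t s -> s = t.
Proof. move=> h1 h2; apply/fsetP => j; apply/idP/idP; [exact: sq_mem h1|exact: sq_mem h2]. Qed.

Lemma sq_ext {s : {fset nat}} {m x : nat} : (forall j, j \in s -> (j <= m)%N) -> (m < x)%N ->
  sqsub s (s `|` [fset x]).
Proof. move=> Hm hx; exists m; apply/fsetP => j; rewrite !inE.
case E: (j \in s) => /=; first by rewrite Hm.
case: eqP => //= ->; by rewrite leqNgt hx. Qed.

Lemma sq_ext_inv {u s : {fset nat}} {m x : nat} : (forall j, j \in s -> (j <= m)%N) -> (m < x)%N ->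
  sqsub u (s `|` [fset x]) -> sqsub u s \/ u = s `|` [fset x].
Proof. move=> Hm hx [i ->]; case: (leqP x i) => hxi.
- right; apply/fsetP => j; rewrite !inE.
  case E: (j \in s) => /=; first by rewrite (leq_trans (Hm _ E) (ltnW (leq_trans hx hxi))).
  by case: eqP => //= ->.
- left; exists i; apply/fsetP => j; rewrite !inE.
  case: eqP => [->|_]; last by rewrite orbF.
  by rewrite orbT /= leqNgt hxi andbF.
Qed.

Section U.
Variable U : (nat -> Prop) -> Prop.
Hypothesis hU : alpha_ultrafilter U.

Lemma Umono {A B : nat -> Prop} : U A -> (forall i, A i -> B i) -> U B.
Proof. by case: hU => [[h _] _]; apply: h. Qed.
Lemma Uand {A B : nat -> Prop} : U A -> U B -> U (fun i => A i /\ B i).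
Proof. by case: hU => [[_ [h _]] _]; apply: h. Qed.
Lemma Unot {A : nat -> Prop} : U A -> (forall i, A i -> False) -> False.
Proof. move=> hA h; case: hU => [[_ [_ [h0 _]]] _]; apply: h0; exact: Umono hA h. Qed.
Lemma Ubig {f} m : nonstandard U f -> U (fun i => (m < f i)%N).
Proof. move=> hf; elim: m => [|m IH].
- refine (Umono (hf 0) _) => i; by case: (f i).
- refine (Umono (Uand IH (hf m.+1)) _) => i [h1 h2].
  rewrite ltn_neqAle h1 andbT; apply/eqP => e; apply: h2; by rewrite e.
Qed.
End U.

Theorem mainTheorem17 (U : (nat -> Prop) -> Prop)
  (a : {fset nat} -> nat -> nat) (H : {fset nat} -> Prop) :
  alpha_ultrafilter U ->
  (forall s, nonstandard U (a s)) ->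
  (forall s, H s -> star_mem U H (fun i => s `|` [fset a s i])) ->
  forall (T : {fset nat} -> Prop) (st : {fset nat}),
    alpha_tree U a T -> is_stem T st -> H st ->
    exists S : {fset nat} -> Prop,
      (forall t, S t -> T t) /\ alpha_tree U a S /\ is_stem S st /\
      (forall t, tree_above S st t -> H t).
Proof.
move=> hU hns hH T st [hT [st0 [hst0 [_ hstar]]]] hst Hst.
have est : st0 = st.
  apply: sq_anti.
  - by apply: hst.2.2; [exact: hst0.1 | exact: hst0.2.1].
  - by apply: hst0.2.2; [exact: hst.1 | exact: hst.2.1].
subst st0.
pose S := fun t => T t /\ (sqsub t st \/
  (sqsub st t /\ forall u, sqsub st u -> sqsub u t -> H u)).
have Sall : forall t, S t -> sqsub st t -> forall u, sqsub st u -> sqsub u t -> H u.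
  move=> t [_ [h|[_ h]]] ht //.
  move=> u h1 h2; have e1 := sq_anti h ht; subst t.
  by rewrite (sq_anti h2 h1).
have Sst : S st by split; [exact: hst.1 | left; exact: sq_refl].
have Sstar : forall s, S s -> sqsub st s -> star_mem U S (fun i => s `|` [fset a s i]).
  move=> s hs hsts.
  have hHs := Sall s hs hsts.
  have [m Hm] := bnd s.
  have := Uand hU (hstar s (conj hs.1 hsts)) (Uand hU (hH s (hHs s hsts (sq_refl s))) (Ubig hU m (hns s))).
  move=> hh; refine (Umono hU hh _) => i [hT1 [hH1 hlt]]; split => //; right; split.
    exact: sq_trans hsts (sq_ext Hm hlt).
  move=> u h1 h2; case: (sq_ext_inv Hm hlt h2) => [h3|->] //.
  exact: hHs.
have Stree : is_tree S.
  split; first by exists st.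
  move=> s t [hTt ht] hst'; split; first exact: hT.2 hTt hst'.
  case: ht => [h|[h1 h2]]; first by left; exact: sq_trans hst' h.
  case: (sq_comp hst' h1) => h3; first by left.
  right; split => // u hu1 hu2; apply: h2 => //; exact: sq_trans hu2 hst'.
have Sstem : is_stem S st.
  split => //; split.
    move=> t [_ [h|[h _]]]; [by right | by left].
  move=> s' hs' hcomp.
  case: (hcomp st Sst) => // h.
  case: (eqVneq s' st) => [->|hne]; first exact: sq_refl.
  exfalso.
  have [m1 Hm1] := bnd st; have [m2 Hm2] := bnd s'.
  have hh := Uand hU (Sstar st Sst (sq_refl st)) (Ubig hU (maxn m1 m2) (hns st)).
  apply: (Unot hU hh) => i [hSi hlt].
  set x := a st i in hSi hlt.
  have h1 : forall j, j \in st -> (j <= maxn m1 m2)%N.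
    by move=> j /Hm1 hj; rewrite leq_max hj.
  have hx : x \notin s'.
    apply/negP => /Hm2 hj; move: hlt; rewrite ltnNge leq_max hj orbT //.
  case: (hcomp _ hSi) => h2.
  - case: (sq_ext_inv h1 hlt h2) => [h3|e].
    + by move: hne; rewrite (sq_anti h3 h) eqxx.
    + by move: hx; rewrite e !inE eqxx orbT.
  - by move: hx; rewrite (sq_mem h2) // !inE eqxx orbT.
exists S; split; first by move=> t [].
split; last split => //.
  split => //; exists st; split => //; split; first by exists st; split => //; exact: sq_refl.
  by move=> s [hs hsts]; apply: Sstar.
move=> t [hSt htt]; exact: (Sall t hSt htt t htt (sq_refl t)).
Qed.
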